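(* Let $p>1$ and $x\in(0,1)$, and put $z=\left(\frac{x^p}{1+x^p}\right)^{1/p}$. Then $$z\left(1+\frac{\log(1+x^p)}{1+p}\right)<\operatorname{arsinh}_p x<z\left(1+\frac1p\log(1+x^p)\right)$$ and $$x\left(1-\frac{1}{1+p}\log(1-x^p)\right)<\operatorname{artanh}_p x<x\left(1-\frac1p\log(1-x^p)\right).$$
   Context: For $p>1$ and $x\in(0,1)$: $\operatorname{arsinh}_p x=\int_0^x(1+t^p)^{-1/p}\,dt$ and $\operatorname{artanh}_p x=\int_0^x(1-t^p)^{-1}\,dt$. *)

(* Defs.v *)
From Stdlib Require Import Reals.
From Coquelicot Require Import Coquelicot.
Open Scope R_scope.

Definition arsinh_p (p x : R) : R :=
  RInt (fun t => Rpower (1 + Rpower t p) (- (1 / p))) 0 x.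

Definition artanh_p (p x : R) : R :=
  RInt (fun t => / (1 - Rpower t p)) 0 x.

(* Main.v *)
Require Import Defs.
From Stdlib Require Import Reals Lra.
From Coquelicot Require Import Coquelicot.
Open Scope R_scope.

Definition qf (p t : R) : R := if Rlt_dec 0 t then Rpower t p else 0.

Lemma qf_pos p t : 0 < t -> qf p t = Rpower t p.
Proof. intros H; unfold qf; destruct (Rlt_dec 0 t); [reflexivity|lra]. Qed.

Lemma qf_npos p t : t <= 0 -> qf p t = 0.
Proof. intros H; unfold qf; destruct (Rlt_dec 0 t); [lra|reflexivity]. Qed.

Lemma rpow_lt_self p u : 1 < p -> 0 < u < 1 -> Rpower u p < u.
Proof.
  intros Hp Hu. unfold Rpower.
  assert (ln u < 0). { rewrite <- ln_1. apply ln_increasing; lra. }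
  rewrite <- (exp_ln u) at 2 by lra. apply exp_increasing. nra.
Qed.

Lemma rpow_pos p u : 0 < Rpower u p.
Proof. unfold Rpower; apply exp_pos. Qed.

Lemma qf_range p t : 1 < p -> 0 < t < 1 -> 0 < qf p t < 1.
Proof.
  intros Hp Ht. rewrite qf_pos by lra. split. apply rpow_pos.
  pose proof (rpow_lt_self p t Hp Ht); lra.
Qed.

Lemma qf_cont0 p : 1 < p -> continuous (qf p) 0.
Proof.
  intros Hp. apply continuity_pt_filterlim. apply continuity_pt_locally.
  intros eps. exists (mkposreal (Rmin eps 1) ltac:(apply Rmin_pos; [apply cond_pos|lra])).
  intros u Hu. unfold ball in Hu; simpl in Hu; unfold AbsRing_ball, abs, minus, plus, opp in Hu; simpl in Hu.
  rewrite (qf_npos p 0) by lra.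
  assert (Hu2 : Rabs (u:R) < Rmin eps 1) by (rewrite Ropp_0, Rplus_0_r in Hu; exact Hu). clear Hu; rename Hu2 into Hu.
  pose proof (Rmin_l eps 1); pose proof (Rmin_r eps 1).
  destruct (Rlt_dec 0 u).
  - pose proof (qf_range p u Hp ltac:(split; [lra| apply Rabs_def2 in Hu; lra])).
    rewrite qf_pos in * by lra. pose proof (rpow_lt_self p u Hp ltac:(split; [lra| apply Rabs_def2 in Hu; lra])).
    rewrite Rabs_right by lra. apply Rabs_def2 in Hu. lra.
  - rewrite qf_npos by lra. rewrite Rminus_0_r, Rabs_R0. apply cond_pos.
Qed.

Lemma qf_derive p t : 0 < t -> is_derive (qf p) t (p * Rpower t (p-1)).
Proof.
  intros Ht. apply is_derive_Reals.
  apply (derivable_pt_lim_locally_ext (fun x => Rpower x p) _ t 0 (t+1)); [lra| |].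
  intros x Hx; rewrite qf_pos by lra; reflexivity.
  apply derivable_pt_lim_power; lra.
Qed.

Lemma qf_cont p t : 1 < p -> 0 <= t -> continuous (qf p) t.
Proof.
  intros Hp Ht. destruct (Req_dec t 0) as [->|]. apply qf_cont0; auto.
  apply (ex_derive_continuous (K:=R_AbsRing) (qf p)). eexists. apply qf_derive. lra.
Qed.

Lemma qf_scale p t : 0 < t -> t * (p * Rpower t (p-1)) = p * qf p t.
Proof.
  intros Ht. rewrite qf_pos by lra.
  replace (Rpower t p) with (Rpower t (1 + (p-1))) by (f_equal; ring). rewrite Rpower_plus, Rpower_1 by lra. ring.
Qed.

Lemma deriv_tmul0 (g : R -> R) : continuous g 0 -> is_derive (fun t => t * g t) 0 (g 0).
Proof.
  intros Hg. apply is_derive_Reals. apply continuity_pt_filterlim in Hg.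
  rewrite continuity_pt_locally in Hg.
  intros eps Heps. destruct (Hg (mkposreal eps Heps)) as [d Hd].
  exists d. intros hh Hh0 Hhd.
  replace (((0 + hh) * g (0 + hh) - 0 * g 0) / hh - g 0) with (g hh - g 0)
    by (rewrite Rplus_0_l; field; auto).
  apply (Hd hh). unfold ball; simpl; unfold AbsRing_ball, abs, minus, plus, opp; simpl.
  rewrite Ropp_0, Rplus_0_r; exact Hhd.
Qed.

Lemma qf_range0 p t : 1 < p -> 0 <= t < 1 -> 0 <= qf p t < 1.
Proof.
  intros Hp Ht. destruct (Req_dec t 0) as [->|].
  rewrite qf_npos; lra. pose proof (qf_range p t Hp ltac:(lra)); lra.
Qed.

Section Main.
Variables (p : R) (k h h' : R -> R) (x : R).
Hypotheses (Hp : 1 < p) (Hx : 0 < x < 1)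
  (Hd : forall u, 0 <= u < 1 -> is_derive h u (h' u))
  (Hc' : forall u, 0 <= u < 1 -> continuous h' u)
  (Hck : forall u, 0 <= u < 1 -> continuous k u).

Definition G t := h (qf p t) + p * qf p t * h' (qf p t).

Lemma G_cont t : 0 <= t <= x -> continuous G t.
Proof.
  intros Ht. pose proof (qf_range0 p t Hp ltac:(lra)) as Hq.
  pose proof (qf_cont p t Hp ltac:(lra)) as Hqc.
  unfold G. apply (continuous_plus (fun t => h (qf p t)) (fun t => p * qf p t * h' (qf p t))).
  - apply (continuous_comp (qf p) h). auto.
    apply (ex_derive_continuous (K:=R_AbsRing) h). eexists; apply Hd; auto.
  - apply (continuous_mult (fun t => p * qf p t) (fun t => h' (qf p t))).
    apply (continuous_mult (fun _ => p) (qf p)). apply continuous_const. auto.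
    apply (continuous_comp (qf p) h'); auto.
Qed.

Lemma F_deriv t : 0 <= t <= x -> is_derive (fun t => t * h (qf p t)) t (G t).
Proof.
  intros Ht. destruct (Req_dec t 0) as [->|Ht0].
  - unfold G. rewrite qf_npos by lra. rewrite Rmult_0_r, Rmult_0_l, Rplus_0_r.
    replace (h 0) with (h (qf p 0)) by (rewrite qf_npos; lra).
    apply deriv_tmul0. apply (continuous_comp (qf p) h). apply qf_cont; lra.
    rewrite qf_npos by lra.
    apply (ex_derive_continuous (K:=R_AbsRing) h). eexists; apply Hd; lra.
  - pose proof (qf_range p t Hp ltac:(lra)) as Hq.
    evar (l : R).
    assert (D : is_derive (fun t => t * h (qf p t)) t l).
    { apply (is_derive_mult (fun t => t) (fun t => h (qf p t))).
      apply is_derive_id.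
      apply (is_derive_comp h (qf p)). apply Hd; lra. apply qf_derive; lra.
      intros; apply Rmult_comm. }
    subst l. revert D.
    intros D. replace (G t) with
      (plus (mult one (h (qf p t))) (mult t (scal (p * Rpower t (p - 1)) (h' (qf p t))))).
    exact D.
    unfold G, plus, mult, one, scal; simpl; unfold mult; simpl.
    rewrite <- (qf_scale p t) by lra. ring.
Qed.

Lemma RInt_G : RInt G 0 x = x * h (qf p x).
Proof.
  apply is_RInt_unique.
  replace (x * h (qf p x)) with (minus (x * h (qf p x)) (0 * h (qf p 0))).
  apply (is_RInt_derive (fun t => t * h (qf p t))).
  intros t Ht. rewrite Rmin_left, Rmax_right in Ht by lra. apply F_deriv; lra.
  intros t Ht. rewrite Rmin_left, Rmax_right in Ht by lra. apply G_cont; lra.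
  unfold minus, plus, opp; simpl. ring.
Qed.

Lemma kq_cont t : 0 <= t <= x -> continuous (fun t => k (qf p t)) t.
Proof.
  intros Ht. apply (continuous_comp (qf p) k). apply qf_cont; lra.
  apply Hck. apply qf_range0; lra.
Qed.

Lemma main_upper : (forall u, 0 < u < 1 -> k u < h u + p * u * h' u) ->
  RInt (fun t => k (qf p t)) 0 x < x * h (qf p x).
Proof.
  intros Hk. rewrite <- RInt_G. apply RInt_lt. lra.
  intros; apply G_cont; lra. intros; apply kq_cont; lra.
  intros t Ht. unfold G. apply Hk. apply qf_range; lra.
Qed.

Lemma main_lower : (forall u, 0 < u < 1 -> h u + p * u * h' u < k u) ->
  x * h (qf p x) < RInt (fun t => k (qf p t)) 0 x.
Proof.
  intros Hk. rewrite <- RInt_G. apply RInt_lt. lra.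
  intros; apply kq_cont; lra. intros; apply G_cont; lra.
  intros t Ht. unfold G. apply Hk. apply qf_range; lra.
Qed.
End Main.

Lemma ln_lt_id u : 0 < u -> ln (1 + u) < u.
Proof.
  intros Hu. rewrite <- (ln_exp u) at 2. apply ln_increasing. lra.
  apply exp_ineq1; lra.
Qed.

Lemma ln_pos1 u : 0 < u -> 0 < ln (1 + u).
Proof. intros; rewrite <- ln_1; apply ln_increasing; lra. Qed.

Definition kT (u : R) := / (1 - u).
Definition hT (c u : R) := 1 - c * ln (1 - u).
Definition hT' (c u : R) := c / (1 - u).

Lemma hT_deriv c u : u < 1 -> is_derive (hT c) u (hT' c u).
Proof. intros Hu. unfold hT, hT'. auto_derive. lra. field. lra. Qed.

Lemma hT'_cont c u : u < 1 -> continuous (hT' c) u.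
Proof. intros Hu. apply (ex_derive_continuous (K:=R_AbsRing) (hT' c)). unfold hT'. auto_derive. lra. Qed.

Lemma kT_cont u : u < 1 -> continuous kT u.
Proof. intros Hu. apply (ex_derive_continuous (K:=R_AbsRing) kT). unfold kT. auto_derive. lra. Qed.

Definition kS (p u : R) := Rpower (1 + u) (- (1 / p)).
Definition hS (p c u : R) := Rpower (1 + u) (- (1 / p)) * (1 + c * ln (1 + u)).
Definition hS' (p c u : R) :=
  Rpower (1 + u) (- (1 / p)) / (1 + u) * (c - (1 / p) * (1 + c * ln (1 + u))).

Lemma hS_deriv p c u : 0 < p -> -1 < u -> is_derive (hS p c) u (hS' p c u).
Proof. intros Hp Hu. unfold hS, hS', Rpower. auto_derive. lra. field. lra. Qed.

Lemma hS'_cont p c u : 0 < p -> -1 < u -> continuous (hS' p c) u.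
Proof. intros Hp Hu. apply (ex_derive_continuous (K:=R_AbsRing) (hS' p c)). unfold hS', Rpower. auto_derive. lra. Qed.

Lemma kS_cont p u : -1 < u -> continuous (kS p) u.
Proof. intros Hu. apply (ex_derive_continuous (K:=R_AbsRing) (kS p)). unfold kS, Rpower. auto_derive. lra. Qed.

Lemma hS_comb p c u : 0 < p -> -1 < u ->
  hS p c u + p * u * hS' p c u = kS p u / (1 + u) * (1 + c * ln (1 + u) + p * c * u).
Proof. intros. unfold hS, hS', kS. field. lra. Qed.
Lemma z_eq p x : 0 < p -> 0 < x ->
  Rpower (Rpower x p / (1 + Rpower x p)) (1 / p) = x * Rpower (1 + Rpower x p) (- (1 / p)).
Proof.
  intros Hp Hx. pose proof (rpow_pos p x).
  unfold Rpower at 1. rewrite ln_div by lra. unfold Rpower at 1. rewrite ln_exp.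
  unfold Rpower. set (X := 1 + exp (p * ln x)).
  transitivity (exp (ln x + - (1/p) * ln X)). f_equal. field. lra.
  rewrite exp_plus, exp_ln by lra. reflexivity.
Qed.

Theorem theorem1p2 (p x : R) (hp : 1 < p) (hx0 : 0 < x) (hx1 : x < 1) :
  let z := Rpower (Rpower x p / (1 + Rpower x p)) (1 / p) in
  (z * (1 + ln (1 + Rpower x p) / (1 + p)) < arsinh_p p x /\
   arsinh_p p x < z * (1 + (1 / p) * ln (1 + Rpower x p))) /\
  (x * (1 - (1 / (1 + p)) * ln (1 - Rpower x p)) < artanh_p p x /\
   artanh_p p x < x * (1 - (1 / p) * ln (1 - Rpower x p))).
Proof.
  intros z. unfold z. rewrite z_eq by lra.
  assert (ES : arsinh_p p x = RInt (fun t => kS p (qf p t)) 0 x).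
  { unfold arsinh_p. apply RInt_ext. intros t Ht.
    rewrite Rmin_left, Rmax_right in Ht by lra. rewrite qf_pos by lra. reflexivity. }
  assert (ET : artanh_p p x = RInt (fun t => kT (qf p t)) 0 x).
  { unfold artanh_p. apply RInt_ext. intros t Ht.
    rewrite Rmin_left, Rmax_right in Ht by lra. rewrite qf_pos by lra. reflexivity. }
  rewrite ES, ET.
  assert (Hxx : 0 < x < 1) by lra.
  pose proof (qf_pos p x hx0) as Eq.
  split; [split|split].
  - replace (x * Rpower (1 + Rpower x p) (- (1 / p)) * (1 + ln (1 + Rpower x p) / (1 + p)))
      with (x * hS p (1 / (1 + p)) (qf p x)) by (rewrite Eq; unfold hS; field; lra).
    apply (main_lower p (kS p) (hS p (1/(1+p))) (hS' p (1/(1+p))) x hp Hxx).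
    + intros; apply hS_deriv; lra.
    + intros; apply hS'_cont; lra.
    + intros; apply kS_cont; lra.
    + intros u Hu. rewrite hS_comb by lra.
      assert (0 < kS p u) by apply rpow_pos.
      pose proof (ln_lt_id u ltac:(lra)).
      replace (kS p u) with (kS p u / (1 + u) * (1 + u)) at 2 by (field; lra).
      apply Rmult_lt_compat_l. apply Rdiv_lt_0_compat; lra.
      apply (Rmult_lt_reg_l (1 + p)). lra.
      replace ((1 + p) * (1 + 1 / (1 + p) * ln (1 + u) + p * (1 / (1 + p)) * u))
        with (1 + p + ln (1 + u) + p * u) by (field; lra). nra.
  - replace (x * Rpower (1 + Rpower x p) (- (1 / p)) * (1 + 1 / p * ln (1 + Rpower x p)))
      with (x * hS p (1 / p) (qf p x)) by (rewrite Eq; unfold hS; field; lra).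
    apply (main_upper p (kS p) (hS p (1/p)) (hS' p (1/p)) x hp Hxx).
    + intros; apply hS_deriv; lra.
    + intros; apply hS'_cont; lra.
    + intros; apply kS_cont; lra.
    + intros u Hu. rewrite hS_comb by lra.
      assert (0 < kS p u) by apply rpow_pos.
      pose proof (ln_pos1 u ltac:(lra)).
      replace (kS p u) with (kS p u / (1 + u) * (1 + u)) at 1 by (field; lra).
      apply Rmult_lt_compat_l. apply Rdiv_lt_0_compat; lra.
      replace (1 + 1 / p * ln (1 + u) + p * (1 / p) * u)
        with (1 + u + ln (1 + u) / p) by (field; lra).
      assert (0 < ln (1 + u) / p) by (apply Rdiv_lt_0_compat; lra). lra.
  - replace (x * (1 - 1 / (1 + p) * ln (1 - Rpower x p)))
      with (x * hT (1 / (1 + p)) (qf p x)) by (rewrite Eq; reflexivity).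
    apply (main_lower p kT (hT (1/(1+p))) (hT' (1/(1+p))) x hp Hxx).
    + intros; apply hT_deriv; lra.
    + intros; apply hT'_cont; lra.
    + intros; apply kT_cont; lra.
    + intros u Hu. unfold hT, hT', kT.
      assert (HL : - ln (1 - u) < u / (1 - u)).
      { rewrite <- ln_Rinv by lra.
        replace (/ (1 - u)) with (1 + u / (1 - u)) by (field; lra).
        apply ln_lt_id. apply Rdiv_lt_0_compat; lra. }
      replace (/ (1 - u)) with (1 + u / (1 - u)) by (field; lra).
      replace (1 - 1 / (1 + p) * ln (1 - u) + p * u * (1 / (1 + p) / (1 - u)))
        with (1 + u / (1 - u) + (1 / (1 + p)) * (- ln (1 - u) - u / (1 - u))) by (field; lra).
      assert (0 < 1 / (1 + p)) by (apply Rdiv_lt_0_compat; lra). nra.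
  - replace (x * (1 - 1 / p * ln (1 - Rpower x p)))
      with (x * hT (1 / p) (qf p x)) by (rewrite Eq; reflexivity).
    apply (main_upper p kT (hT (1/p)) (hT' (1/p)) x hp Hxx).
    + intros; apply hT_deriv; lra.
    + intros; apply hT'_cont; lra.
    + intros; apply kT_cont; lra.
    + intros u Hu. unfold hT, hT', kT.
      assert (HL : ln (1 - u) < 0) by (rewrite <- ln_1; apply ln_increasing; lra).
      replace (/ (1 - u)) with (1 + u / (1 - u)) by (field; lra).
      replace (1 - 1 / p * ln (1 - u) + p * u * (1 / p / (1 - u)))
        with (1 + u / (1 - u) + (- ln (1 - u)) / p) by (field; lra).
      assert (0 < - ln (1 - u) / p) by (apply Rdiv_lt_0_compat; lra). lra.
Qed.
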